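(* Assume (H1), $\lim_{x\to\infty}q(x)=\infty$, and $$\lim_{z\to\infty}\frac{q'(z)}{q(z)}\sqrt{M(z)}=0.$$ Then (i) $\lim_{z\to\infty}q(z)\sqrt{M(z)}=\infty$; (ii) (H2) holds; (iii) $\lim_{z\to\infty}\mathfrak m'(z)/\sqrt{\mathfrak m(z)}=0$.
   Context: Let $q\in C^1([0,\infty))$ and $\gamma(y)=2\int_0^yq$. (H1): $\int_0^\infty e^{\gamma(y)}\int_y^\infty e^{-\gamma(\xi)}d\xi\,dy<\infty$. (H2): $\lim_{x\to\infty}q(x)=\infty$ and $\lim_{x\to\infty}q'(x)/q(x)^2=0$. $M(z)=\int_z^\infty dy/q(y)$ (assumed finite for large $z$ as part of the hypothesis). $\mathfrak m(z)=2\int_z^\infty e^{\gamma(y)}\int_y^\infty e^{-\gamma(\xi)}d\xi\,dy$. *)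

(* Defs.v *)
From Stdlib Require Import Reals Lra ClassicalEpsilon.
Open Scope R_scope.

Definition is_RInt (f : R -> R) (a b v : R) : Prop :=
  exists pr : Riemann_integrable f a b, RiemannInt pr = v.

(* The Riemann integral of f over [a,b] (meaningful when it exists). *)
Definition RInt (f : R -> R) (a b : R) : R :=
  epsilon (inhabits 0) (fun v => is_RInt f a b v).

Definition improper_conv (f : R -> R) (a l : R) : Prop :=
  (forall b, a <= b -> exists v, is_RInt f a b v) /\
  (forall eps, 0 < eps -> exists B, forall b v, B < b -> is_RInt f a b v ->
      Rabs (v - l) < eps).

(* The value of int_a^infty f (meaningful when it converges). *)
Definition Iinf (f : R -> R) (a : R) : R :=
  epsilon (inhabits 0) (fun l => improper_conv f a l).

Definition lim_infty (f : R -> R) (l : R) : Prop :=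
  forall eps, 0 < eps -> exists B, forall x, B < x -> Rabs (f x - l) < eps.

Definition tends_infty (f : R -> R) : Prop :=
  forall A, exists B, forall x, B < x -> A < f x.

Definition gam (q : R -> R) (y : R) : R := 2 * RInt q 0 y.

Definition inner (q : R -> R) (y : R) : R :=
  Iinf (fun xi => exp (- gam q xi)) y.

Definition H1 (q : R -> R) : Prop :=
  (forall y, 0 <= y -> exists l, improper_conv (fun xi => exp (- gam q xi)) y l) /\
  (exists L, improper_conv (fun y => exp (gam q y) * inner q y) 0 L).

(* (H2), with dq the derivative q' *)
Definition H2 (q dq : R -> R) : Prop :=
  tends_infty q /\ lim_infty (fun x => dq x / (q x) ^ 2) 0.

Definition Mfun (q : R -> R) (z : R) : R := Iinf (fun y => / q y) z.

Definition mfrak (q : R -> R) (z : R) : R :=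
  2 * Iinf (fun y => exp (gam q y) * inner q y) z.

(* Main.v *)
From Coquelicot Require Import Coquelicot.
Require Import Defs.
From Stdlib Require Import Reals Lra FunctionalExtensionality ClassicalEpsilon.
Open Scope R_scope.

Notation CRInt := (@Coquelicot.RInt.RInt R_CompleteNormedModule).
Notation CisRInt := (@Coquelicot.RInt.is_RInt R_NormedModule).

Lemma bridge1 f a b v : is_RInt f a b v -> CisRInt f a b v.
Proof. intros [pr Hv]. subst v. rewrite <- (RInt_Reals f a b pr).
  apply (RInt_correct (V:=R_CompleteNormedModule)), ex_RInt_Reals_1; exact pr. Qed.

Lemma bridge2 f a b : ex_RInt f a b -> is_RInt f a b (CRInt f a b).
Proof. intros H. exists (ex_RInt_Reals_0 _ _ _ H). symmetry; apply RInt_Reals. Qed.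

Lemma is_RInt_val f a b v : is_RInt f a b v -> v = CRInt f a b.
Proof. intros H. symmetry. apply is_RInt_unique, bridge1; exact H. Qed.

Lemma DRInt_eq f a b : ex_RInt f a b -> Defs.RInt f a b = CRInt f a b.
Proof. intros H. unfold Defs.RInt.
  pose proof (epsilon_spec (inhabits 0) (fun v => is_RInt f a b v) (ex_intro _ _ (bridge2 f a b H))) as E.
  apply is_RInt_val; exact E. Qed.

Lemma ic_ex f a L : improper_conv f a L -> forall b, a <= b -> ex_RInt f a b.
Proof. intros [H _] b Hb. destruct (H b Hb) as [v Hv]. exists v. apply bridge1; exact Hv. Qed.

Lemma ic_lim f a L : improper_conv f a L -> forall eps, 0 < eps ->
  exists B, a <= B /\ forall b, B < b -> Rabs (CRInt f a b - L) < eps.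
Proof. intros Hc eps He. destruct Hc as [H1' H2']. destruct (H2' eps He) as [B HB].
  exists (Rmax B a). split; [apply Rmax_r|]. intros b Hb.
  assert (B < b /\ a <= b) as [Hb1 Hb2] by (pose proof (Rmax_l B a); pose proof (Rmax_r B a); lra).
  apply (HB b); auto. apply bridge2. eapply ic_ex; [split; eauto|]. exact Hb2. Qed.

Lemma ic_intro f a L : (forall b, a <= b -> ex_RInt f a b) ->
  (forall eps, 0 < eps -> exists B, forall b, B < b -> a <= b -> Rabs (CRInt f a b - L) < eps) ->
  improper_conv f a L.
Proof. intros He Hl. split.
  - intros b Hb. exists (CRInt f a b). apply bridge2; auto.
  - intros eps Hp. destruct (Hl eps Hp) as [B HB]. exists (Rmax B a). intros b v Hb Hv.
    rewrite (is_RInt_val _ _ _ _ Hv). apply HB.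
    pose proof (Rmax_l B a); lra. pose proof (Rmax_r B a); lra. Qed.

Lemma ic_unique f a l l' : improper_conv f a l -> improper_conv f a l' -> l = l'.
Proof. intros H H'. destruct (Req_dec l l') as [|Hn]; auto. exfalso.
  assert (0 < Rabs (l - l') / 3) as Hp by (assert (l - l' <> 0) by lra; pose proof (Rabs_pos_lt _ H0); lra).
  destruct (ic_lim _ _ _ H _ Hp) as [B [_ HB]]. destruct (ic_lim _ _ _ H' _ Hp) as [B' [_ HB']].
  pose proof (HB (Rmax B B' + 1) ltac:(pose proof (Rmax_l B B'); lra)).
  pose proof (HB' (Rmax B B' + 1) ltac:(pose proof (Rmax_r B B'); lra)).
  set (v := CRInt f a (Rmax B B' + 1)) in *.
  assert (Rabs (l - l') <= Rabs (v - l) + Rabs (v - l')).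
  { replace (l - l') with (-(v - l) + (v - l')) by ring.
    eapply Rle_trans; [apply Rabs_triang|]. rewrite Rabs_Ropp; lra. }
  lra. Qed.

Lemma Iinf_eq f a l : improper_conv f a l -> Iinf f a = l.
Proof. intros H. unfold Iinf.
  pose proof (epsilon_spec (inhabits 0) (fun l => improper_conv f a l) (ex_intro _ _ H)) as E.
  eapply ic_unique; eauto. Qed.

Lemma ic_shift f a0 L a1 : improper_conv f a0 L -> a0 <= a1 ->
  improper_conv f a1 (L - CRInt f a0 a1).
Proof. intros H Ha. apply ic_intro.
  - intros b Hb. apply (ex_RInt_Chasles_2 f a0 a1 b); [lra|]. eapply ic_ex; eauto; lra.
  - intros eps He. destruct (ic_lim _ _ _ H _ He) as [B [HB0 HB]]. exists B. intros b Hb Hab.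
    assert (E : CRInt f a0 a1 + CRInt f a1 b = CRInt f a0 b).
    { apply (RInt_Chasles f a0 a1 b). eapply ic_ex; eauto; lra.
      apply (ex_RInt_Chasles_2 f a0 a1 b); [lra|]. eapply ic_ex; eauto; lra. }
    replace (CRInt f a1 b - (L - CRInt f a0 a1)) with (CRInt f a0 b - L) by lra.
    apply HB; auto. Qed.

Lemma Iinf_shift f a0 L a1 : improper_conv f a0 L -> a0 <= a1 -> Iinf f a1 = L - CRInt f a0 a1.
Proof. intros; apply Iinf_eq, ic_shift; auto. Qed.

Lemma Iinf_deriv f a0 L x : improper_conv f a0 L -> a0 < x -> continuity_pt f x ->
  derivable_pt_lim (Iinf f) x (- f x).
Proof. intros H Hx Hc. apply is_derive_Reals.
  replace (- f x) with (0 - f x) by ring.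
  apply (is_derive_ext_loc (fct_cte L - (fun t => CRInt f a0 t))%F).
  - assert (Hp : 0 < x - a0) by lra. exists (mkposreal _ Hp). intros t Ht.
    change (Rabs (t - x) < x - a0) in Ht. apply Rabs_def2 in Ht.
    unfold minus_fct, fct_cte. rewrite (Iinf_shift f a0 L t); auto; lra.
  - apply is_derive_Reals. apply derivable_pt_lim_minus. apply derivable_pt_lim_const.
    apply is_derive_Reals. apply (is_derive_RInt (V:=R_NormedModule) f (fun t => CRInt f a0 t) a0 x).
    + assert (Hp : 0 < x - a0) by lra. exists (mkposreal _ Hp). intros t Ht.
      change (Rabs (t - x) < x - a0) in Ht. apply Rabs_def2 in Ht.
      apply (RInt_correct (V:=R_CompleteNormedModule)). eapply ic_ex; eauto; lra.
    + apply continuity_pt_filterlim; exact Hc. Qed.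

Lemma Iinf_lim f a0 L : improper_conv f a0 L -> lim_infty (Iinf f) 0.
Proof. intros H eps He. destruct (ic_lim _ _ _ H _ He) as [B [HB0 HB]]. exists B. intros x Hx.
  rewrite (Iinf_shift f a0 L x H); [|lra]. rewrite <- Rabs_Ropp.
  replace (- (L - CRInt f a0 x - 0)) with (CRInt f a0 x - L) by ring. auto. Qed.

Lemma ic_le f h a Lf Lh : improper_conv f a Lf -> improper_conv h a Lh ->
  (forall x, a <= x -> f x <= h x) -> Lf <= Lh.
Proof. intros Hf Hh Hle. destruct (Rle_dec Lf Lh) as [|Hn]; auto. exfalso.
  assert (Hp : 0 < (Lf - Lh) / 2) by lra.
  destruct (ic_lim _ _ _ Hf _ Hp) as [B [HB0 HB]]. destruct (ic_lim _ _ _ Hh _ Hp) as [B' [HB0' HB']].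
  set (b := Rmax B B' + 1).
  assert (B < b) by (unfold b; pose proof (Rmax_l B B'); lra).
  assert (B' < b) by (unfold b; pose proof (Rmax_r B B'); lra).
  specialize (HB b H). specialize (HB' b H0).
  assert (CRInt f a b <= CRInt h a b).
  { apply RInt_le. lra. eapply ic_ex; eauto; lra. eapply ic_ex; eauto; lra.
    intros; apply Hle; lra. }
  apply Rabs_def2 in HB. apply Rabs_def2 in HB'. lra. Qed.

Lemma ic_scal f a L c : improper_conv f a L -> improper_conv (fun x => c * f x) a (c * L).
Proof. intros H. apply ic_intro.
  - intros b Hb. apply (ex_RInt_scal f a b c). eapply ic_ex; eauto.
  - intros eps He. assert (Hp : 0 < eps / (Rabs c + 1)).
    { apply Rdiv_lt_0_compat; auto. pose proof (Rabs_pos c); lra. }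
    destruct (ic_lim _ _ _ H _ Hp) as [B [HB0 HB]]. exists B. intros b Hb Hab.
    assert (Ec : CRInt (fun x => c * f x) a b = c * CRInt f a b) by (exact (RInt_scal (V:=R_CompleteNormedModule) f a b c ltac:(eapply ic_ex; eauto))). rewrite Ec.
    replace (c * CRInt f a b - c * L) with (c * (CRInt f a b - L)) by ring.
    rewrite Rabs_mult. specialize (HB b Hb). pose proof (Rabs_pos c).
    pose proof (Rabs_pos (CRInt f a b - L)).
    apply Rle_lt_trans with (Rabs c * (eps / (Rabs c + 1))).
    apply Rmult_le_compat_l; lra.
    apply Rlt_le_trans with ((Rabs c + 1) * (eps / (Rabs c + 1))).
    apply Rmult_lt_compat_r; lra. right; field; lra. Qed.

Lemma dl_eq f x l l' : derivable_pt_lim f x l -> l = l' -> derivable_pt_lim f x l'.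
Proof. intros H <-; exact H. Qed.
Lemma dl_ext f g x l : (forall y, f y = g y) -> derivable_pt_lim f x l -> derivable_pt_lim g x l.
Proof. intros E H. assert (f = g) by (apply functional_extensionality; auto). subst; auto. Qed.
Lemma dl_mul f g x a b : derivable_pt_lim f x a -> derivable_pt_lim g x b ->
  derivable_pt_lim (fun y => f y * g y) x (a * g x + f x * b).
Proof. intros; exact (derivable_pt_lim_mult f g x a b H H0). Qed.
Lemma dl_plus f g x a b : derivable_pt_lim f x a -> derivable_pt_lim g x b ->
  derivable_pt_lim (fun y => f y + g y) x (a + b).
Proof. intros; exact (derivable_pt_lim_plus f g x a b H H0). Qed.
Lemma dl_minus f g x a b : derivable_pt_lim f x a -> derivable_pt_lim g x b ->
  derivable_pt_lim (fun y => f y - g y) x (a - b).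
Proof. intros; exact (derivable_pt_lim_minus f g x a b H H0). Qed.
Lemma dl_opp f x a : derivable_pt_lim f x a -> derivable_pt_lim (fun y => - f y) x (- a).
Proof. intros; exact (derivable_pt_lim_opp f x a H). Qed.
Lemma dl_scal c f x a : derivable_pt_lim f x a -> derivable_pt_lim (fun y => c * f y) x (c * a).
Proof. intros; exact (derivable_pt_lim_scal f c x a H). Qed.
Lemma dl_cst c x : derivable_pt_lim (fun _ => c) x 0.
Proof. exact (derivable_pt_lim_const c x). Qed.
Lemma dl_id x : derivable_pt_lim (fun y => y) x 1.
Proof. exact (derivable_pt_lim_id x). Qed.
Lemma dl_expc f x a : derivable_pt_lim f x a -> derivable_pt_lim (fun y => exp (f y)) x (exp (f x) * a).
Proof. intros H. exact (derivable_pt_lim_comp f exp x a (exp (f x)) H (derivable_pt_lim_exp _)). Qed.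
Lemma dl_inv f x a : f x <> 0 -> derivable_pt_lim f x a ->
  derivable_pt_lim (fun y => / f y) x (- a / (f x)^2).
Proof. intros Hn H.
  pose proof (derivable_pt_lim_div (fct_cte 1) f x 0 a (derivable_pt_lim_const 1 x) H Hn) as D.
  eapply dl_eq. eapply dl_ext; [|exact D]. intros y; unfold div_fct, fct_cte; unfold Rdiv; ring.
  unfold fct_cte, Rsqr. field; auto. Qed.
Lemma dl_cont f x l : derivable_pt_lim f x l -> continuity_pt f x.
Proof. intros H. apply derivable_continuous_pt. exists l; exact H. Qed.

Lemma sign_lemma f f' a : (forall x, a < x -> derivable_pt_lim f x (f' x)) ->
  (forall x, a < x -> f' x <= 0) -> lim_infty f 0 -> forall x, a < x -> 0 <= f x.
Proof. intros Hd Hs Hl x Hx. destruct (Rle_dec 0 (f x)) as [|Hn]; auto. exfalso.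
  destruct (Hl (- f x) ltac:(lra)) as [B HB].
  set (y := Rmax B x + 1).
  assert (B < y) by (unfold y; pose proof (Rmax_l B x); lra).
  assert (x < y) by (unfold y; pose proof (Rmax_r B x); lra).
  destruct (MVT_cor2 f f' x y H0) as [c [Hc1 Hc2]].
  { intros c Hc. apply Hd. lra. }
  pose proof (Hs c ltac:(lra)). specialize (HB y H).
  assert (f' c * (y - x) <= 0) by (apply Rmult_le_0_r; lra).
  apply Rabs_def2 in HB. lra. Qed.

Lemma deriv_neg_right f c l y0 : derivable_pt_lim f c l -> l < 0 -> c < y0 ->
  exists y, c < y <= y0 /\ f y < f c.
Proof. intros H Hl Hc. destruct (H (- l) ltac:(lra)) as [d Hd].
  set (h := Rmin (d / 2) (y0 - c)).
  assert (0 < h) by (unfold h; apply Rmin_pos; [destruct d; simpl; lra | lra]).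
  assert (h <= d / 2) by apply Rmin_l. assert (h <= y0 - c) by apply Rmin_r.
  exists (c + h). split; [lra|].
  assert (Rabs h < d) by (rewrite Rabs_right; [destruct d; simpl in *; lra | lra]).
  specialize (Hd h ltac:(lra) H3). apply Rabs_def2 in Hd. destruct Hd as [Hd1 _].
  assert ((f (c + h) - f c) / h < 0) by lra.
  assert (f (c + h) - f c < 0).
  { replace (f (c + h) - f c) with ((f (c + h) - f c) / h * h) by (field; lra).
    apply Rmult_neg_pos; lra. }
  lra. Qed.

Lemma part_i (q dq M : R -> R) Z :
 (forall z, Z < z -> 4 < q z) ->
 (forall z, Z < z -> 0 <= M z) ->
 (forall z, Z < z -> derivable_pt_lim q z (dq z)) ->
 (forall z, Z < z -> derivable_pt_lim M z (- / q z)) ->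
 lim_infty (fun z => dq z / q z * sqrt (M z)) 0 ->
 forall A, 0 < A -> exists B, forall z, B < z -> A <= q z ^ 2 * M z.
Proof.
 intros Hq HM Hdq HdM Hl A HA.
 set (t := sqrt A). assert (Ht: t*t = A) by (apply sqrt_sqrt; lra).
 assert (Ht0 : 0 <= t) by apply sqrt_pos.
 set (dl := / (4 * (t + 1))). assert (Hdl : 0 < dl) by (unfold dl; apply Rinv_0_lt_compat; lra).
 assert (Htdl : t * dl <= /4).
 { unfold dl. apply Rmult_le_reg_l with (4 * (t+1)); [lra|].
   rewrite <- Rmult_assoc, (Rmult_comm _ t), Rmult_assoc, Rinv_r; lra. }
 destruct (Hl dl Hdl) as [B1 HB1].
 exists (Rmax Z B1). intros z2 Hz2.
 assert (Z < z2) by (pose proof (Rmax_l Z B1); lra).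
 destruct (Rle_dec A (q z2 ^ 2 * M z2)) as [|Hn]; auto. exfalso.
 set (Rf := fun y => q y ^ 2 * M y + (y - z2)).
 set (y0 := z2 + A + 1).
 set (D := fun y => (dq y * q y + q y * dq y) * M y + q y * q y * (- / q y) + (1 - 0)).
 assert (HdR : forall y, z2 <= y -> derivable_pt_lim Rf y (D y)).
 { intros y Hy. apply (dl_ext (fun y => q y * q y * M y + (y - z2)) Rf).
   { intros; unfold Rf; ring. }
   eapply dl_eq. apply dl_plus. apply dl_mul. apply dl_mul; apply Hdq; lra. apply HdM; lra.
   apply dl_minus. apply dl_id. apply dl_cst. unfold D; ring. }
 destruct (continuity_ab_min Rf z2 y0) as [c [Hmin Hc]].
 { unfold y0; lra. }
 { intros y Hy. eapply dl_cont, HdR; lra. }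
 assert (HRz2 : Rf z2 < A) by (unfold Rf; lra).
 assert (HRy0 : A + 1 <= Rf y0) by (unfold Rf, y0; pose proof (HM (z2 + A + 1) ltac:(lra));
    pose proof (pow2_ge_0 (q (z2 + A + 1))); nra).
 pose proof (Hmin z2 ltac:(unfold y0; lra)) as Hm1.
 assert (Hcy : c < y0).
 { destruct (Rle_lt_or_eq_dec c y0 (proj2 Hc)) as [Hl'|E]; [exact Hl'|]. rewrite E in Hm1. lra. }
 assert (HPc : q c ^ 2 * M c < A) by (unfold Rf in Hm1; lra).
 assert (HDc : D c < 0).
 { assert (Zc : Z < c) by lra.
   pose proof (Hq c Zc) as Hqc. pose proof (HM c Zc) as HMc.
   set (s := sqrt (M c)). assert (Hs : s * s = M c) by (apply sqrt_sqrt; lra).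
   assert (Hs0 : 0 <= s) by apply sqrt_pos.
   set (e := dq c / q c * s).
   assert (He : Rabs e < dl). { specialize (HB1 c ltac:(pose proof (Rmax_r Z B1); lra)).
     rewrite Rminus_0_r in HB1. exact HB1. }
   apply Rabs_def2 in He.
   assert (Hqs : q c * s < t).
   { assert ((q c * s) * (q c * s) < t * t) by (rewrite Ht; rewrite <- Hs in HPc; nra).
     nra. }
   assert (Eq : e * q c = dq c * s) by (unfold e; field; lra).
   assert (E2 : D c = 2 * q c * (q c * s) * e - q c + 1).
   { unfold D. rewrite <- Hs. replace (q c * q c * - / q c) with (- q c) by (field; lra).
     replace (2 * q c * (q c * s) * e) with (2 * q c * s * (e * q c)) by ring. rewrite Eq. ring. }
   rewrite E2.
   assert ((q c * s) * e <= t * dl).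
   { assert (0 <= q c * s) by nra. destruct (Rle_dec 0 e). apply Rmult_le_compat; lra.
     assert (q c * s * e <= 0) by (apply Rmult_le_0_l; lra). nra. }
   nra. }
 destruct (deriv_neg_right Rf c (D c) y0 (HdR c ltac:(lra)) HDc Hcy) as [y [Hy1 Hy2]].
 pose proof (Hmin y ltac:(lra)). lra.
Qed.

Lemma absle x a : Rabs x <= a -> - a <= x <= a.
Proof. intros H. pose proof (Rle_abs x). pose proof (Rle_abs (- x)). rewrite Rabs_Ropp in H1. lra. Qed.

Lemma lim_ext f g l : (forall y, f y = g y) -> lim_infty f l -> lim_infty g l.
Proof. intros E H eps He. destruct (H eps He) as [B HB]. exists B. intros; rewrite <- E; auto. Qed.

Lemma lim_comb f g a b : lim_infty f 0 -> lim_infty g 0 -> lim_infty (fun y => a * f y + b * g y) 0.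
Proof. intros Hf Hg eps He.
  pose proof (Rabs_pos a). pose proof (Rabs_pos b).
  set (e' := eps / (Rabs a + Rabs b + 1)).
  assert (He' : 0 < e') by (unfold e'; apply Rdiv_lt_0_compat; lra).
  destruct (Hf e' He') as [B1 H1']. destruct (Hg e' He') as [B2 H2'].
  exists (Rmax B1 B2). intros x Hx.
  specialize (H1' x ltac:(pose proof (Rmax_l B1 B2); lra)).
  specialize (H2' x ltac:(pose proof (Rmax_r B1 B2); lra)).
  rewrite Rminus_0_r in *.
  eapply Rle_lt_trans. apply Rabs_triang. rewrite !Rabs_mult.
  pose proof (Rabs_pos (f x)). pose proof (Rabs_pos (g x)).
  apply Rle_lt_trans with ((Rabs a + Rabs b) * e'). nra.
  unfold e'. apply Rmult_lt_reg_r with (Rabs a + Rabs b + 1); [lra|].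
  replace ((Rabs a + Rabs b) * (eps / (Rabs a + Rabs b + 1)) * (Rabs a + Rabs b + 1))
    with ((Rabs a + Rabs b) * eps) by (field; lra). nra. Qed.

Lemma I_bounds (q dq gm I : R -> R) Z :
 (forall y, Z < y -> 0 < q y) ->
 (forall y, Z < y -> derivable_pt_lim q y (dq y)) ->
 (forall y, Z < y -> derivable_pt_lim gm y (2 * q y)) ->
 (forall y, Z < y -> derivable_pt_lim I y (- exp (- gm y))) ->
 (forall y, Z < y -> Rabs (dq y / q y ^ 2) <= 1) ->
 lim_infty I 0 -> lim_infty (fun y => exp (- gm y) / (2 * q y)) 0 ->
 forall y, Z < y -> 2/3 * (exp (- gm y) / (2 * q y)) <= I y <= 2 * (exp (- gm y) / (2 * q y)).
Proof.
  intros Hq Hdq Hdg HdI Hr HI HG.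
  set (G := fun y => exp (- gm y) / (2 * q y)).
  set (Gd := fun y => - exp (- gm y) - exp (- gm y) * (dq y / q y ^ 2) / 2).
  assert (HdG : forall y, Z < y -> derivable_pt_lim G y (Gd y)).
  { intros y Hy. pose proof (Hq y Hy).
    apply (dl_ext (fun y => exp (- gm y) * / (2 * q y)) G); [intros; reflexivity|].
    eapply dl_eq. apply dl_mul. apply dl_expc, dl_opp, Hdg; auto.
    apply dl_inv. lra. apply dl_scal, Hdq; auto.
    unfold Gd. field. lra. }
  intros y Hy. split.
  - assert (0 <= (fun y => I y - 2/3 * G y) y); [|simpl in *; unfold G in *; lra].
    apply (sign_lemma (fun y => I y - 2/3 * G y) (fun y => - exp (- gm y) - 2/3 * Gd y) Z); auto.
    + intros x Hx. apply dl_minus. apply HdI; auto. apply dl_scal, HdG; auto.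
    + intros x Hx. unfold Gd. pose proof (exp_pos (- gm x)). specialize (Hr x Hx).
      apply absle in Hr. nra.
    + apply (lim_ext (fun y => 1 * I y + (- (2/3)) * G y)). intros; ring.
      apply lim_comb; auto.
  - assert (0 <= (fun y => 2 * G y - I y) y); [|simpl in *; unfold G in *; lra].
    apply (sign_lemma (fun y => 2 * G y - I y) (fun y => 2 * Gd y - - exp (- gm y)) Z); auto.
    + intros x Hx. apply dl_minus. apply dl_scal, HdG; auto. apply HdI; auto.
    + intros x Hx. unfold Gd. pose proof (exp_pos (- gm x)). specialize (Hr x Hx).
      apply absle in Hr. nra.
    + apply (lim_ext (fun y => (-1) * I y + 2 * G y)). intros; ring.
      apply lim_comb; auto.
Qed.

Lemma q_exRInt q dq : (forall x, 0 <= x -> derivable_pt_lim q x (dq x)) ->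
  forall t, 0 <= t -> ex_RInt q 0 t.
Proof. intros Hd t Ht. apply (ex_RInt_continuous (V:=R_CompleteNormedModule)). intros z Hz.
  rewrite Rmin_left in Hz by lra. rewrite Rmax_right in Hz by lra.
  apply continuity_pt_filterlim. eapply dl_cont, Hd; lra. Qed.

Lemma gam_deriv q dq : (forall x, 0 <= x -> derivable_pt_lim q x (dq x)) ->
  forall y, 0 < y -> derivable_pt_lim (gam q) y (2 * q y).
Proof. intros Hd y Hy. apply is_derive_Reals.
  apply (is_derive_ext_loc (fun t => 2 * CRInt q 0 t)).
  - exists (mkposreal _ Hy). intros t Ht.
    change (Rabs (t - y) < y) in Ht. apply Rabs_def2 in Ht.
    unfold gam. rewrite DRInt_eq; auto. eapply q_exRInt; eauto; lra.
  - apply is_derive_Reals. apply dl_scal. apply is_derive_Reals.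
    apply (is_derive_RInt (V:=R_NormedModule) q (fun t => CRInt q 0 t) 0 y).
    + exists (mkposreal _ Hy). intros t Ht.
      change (Rabs (t - y) < y) in Ht. apply Rabs_def2 in Ht.
      apply (RInt_correct (V:=R_CompleteNormedModule)). eapply q_exRInt; eauto; lra.
    + apply continuity_pt_filterlim. eapply dl_cont, Hd; lra. Qed.

Lemma exp_le' x y : x <= y -> exp x <= exp y.
Proof. intros H. destruct (Rle_lt_or_eq_dec x y H) as [H'|E].
  left; apply exp_increasing; auto. subst; lra. Qed.

Theorem lemma6p1 (q dq : R -> R)
  (* q in C^1([0,infty)), with derivative dq *)
  (Hder : forall x, 0 <= x -> derivable_pt_lim q x (dq x))
  (Hcont : forall x, 0 <= x -> continuity_pt dq x)
  (* M(z) finite for large z *)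
  (HM : exists z0, forall z, z0 <= z -> exists l, improper_conv (fun y => / q y) z l)
  (Hh1 : H1 q)
  (Hqinf : tends_infty q)
  (Hlim : lim_infty (fun z => dq z / q z * sqrt (Mfun q z)) 0) :
  tends_infty (fun z => q z * sqrt (Mfun q z)) /\
  H2 q dq /\
  (exists dm : R -> R, exists z0 : R,
      (forall z, z0 < z -> derivable_pt_lim (mfrak q) z (dm z)) /\
      lim_infty (fun z => dm z / sqrt (mfrak q z)) 0).
Proof.
 destruct HM as [z0 HMz].
 destruct (HMz z0 (Rle_refl _)) as [LM0 HLM0].
 destruct (Hqinf 4) as [B4 HB4].
 set (Z := Rmax (Rmax B4 z0) 1).
 assert (HZ1 : B4 <= Z /\ z0 <= Z /\ 1 <= Z).
 { unfold Z. pose proof (Rmax_l (Rmax B4 z0) 1). pose proof (Rmax_r (Rmax B4 z0) 1).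
   pose proof (Rmax_l B4 z0). pose proof (Rmax_r B4 z0). lra. }
 assert (Hq4 : forall z, Z < z -> 4 < q z) by (intros; apply HB4; lra).
 assert (Hdq' : forall z, Z < z -> derivable_pt_lim q z (dq z)) by (intros; apply Hder; lra).
 assert (HMd : forall z, Z < z -> derivable_pt_lim (Mfun q) z (- / q z)).
 { intros z Hz. unfold Mfun. apply (Iinf_deriv (fun y => / q y) z0 LM0 z HLM0). lra.
   apply continuity_pt_inv. eapply dl_cont, Hder; lra. pose proof (Hq4 z Hz); lra. }
 assert (HMic : forall z, z0 <= z -> improper_conv (fun y => / q y) z (Mfun q z)).
 { intros z Hz. unfold Mfun. rewrite (Iinf_shift _ z0 LM0 z HLM0 Hz). apply ic_shift; auto. }
 assert (HM0 : forall z, Z < z -> 0 <= Mfun q z).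
 { intros z Hz. pose proof (ic_scal _ _ _ 0 (HMic z ltac:(lra))) as H0.
   pose proof (ic_le _ _ _ _ _ H0 (HMic z ltac:(lra))) as H'. rewrite Rmult_0_l in H'. apply H'.
   intros x Hx. rewrite Rmult_0_l. left; apply Rinv_0_lt_compat. pose proof (Hq4 x ltac:(lra)); lra. }
 pose proof (part_i q dq (Mfun q) Z Hq4 HM0 Hdq' HMd Hlim) as HP.
 assert (Hi : tends_infty (fun z => q z * sqrt (Mfun q z))).
 { intros A. destruct (HP (A*A + 1) ltac:(nra)) as [B HB]. exists (Rmax B Z). intros z Hz.
   assert (B < z) by (pose proof (Rmax_l B Z); lra). assert (Z < z) by (pose proof (Rmax_r B Z); lra).
   specialize (HB z H). pose proof (Hq4 z H0). pose proof (HM0 z H0).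
   set (s := sqrt (Mfun q z)). assert (Hs : s*s = Mfun q z) by (apply sqrt_sqrt; auto).
   assert (Hs0 : 0 <= s) by apply sqrt_pos.
   assert (Hqs : (q z * s) * (q z * s) >= A*A+1) by (rewrite <- Hs in HB; nra).
   assert (0 <= q z * s) by nra.
   destruct (Rlt_dec A (q z * s)) as [|Hn]; auto. exfalso. nra. }
 assert (Hr : lim_infty (fun x => dq x / q x ^ 2) 0).
 { intros eps He. destruct (Hlim eps He) as [B1 HB1]. destruct (HP 1 Rlt_0_1) as [B2 HB2].
   exists (Rmax (Rmax B1 B2) Z). intros z Hz.
   pose proof (Rmax_l (Rmax B1 B2) Z). pose proof (Rmax_r (Rmax B1 B2) Z).
   pose proof (Rmax_l B1 B2). pose proof (Rmax_r B1 B2).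
   specialize (HB1 z ltac:(lra)). specialize (HB2 z ltac:(lra)).
   pose proof (Hq4 z ltac:(lra)). pose proof (HM0 z ltac:(lra)).
   set (s := sqrt (Mfun q z)) in *. assert (Hs : s*s = Mfun q z) by (apply sqrt_sqrt; auto).
   assert (Hs0 : 0 <= s) by apply sqrt_pos.
   assert (Hqs : 1 <= q z * s).
   { assert ((q z * s) * (q z * s) >= 1) by (rewrite <- Hs in HB2; nra). assert (0 <= q z * s) by nra. nra. }
   rewrite Rminus_0_r in *.
   assert (E : dq z / q z ^ 2 * (q z * s) = dq z / q z * s) by (field; lra).
   assert (E2 : Rabs (dq z / q z ^ 2) * (q z * s) = Rabs (dq z / q z * s)).
   { rewrite <- E, Rabs_mult, (Rabs_right (q z * s)); lra. }
   pose proof (Rabs_pos (dq z / q z ^ 2)). nra. }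
 split; [exact Hi|]. split; [split; auto|].
 destruct Hh1 as [Hin [Lg Hg]].
 destruct (Hin 0 (Rle_refl 0)) as [Le HLe].
 pose proof (gam_deriv q dq Hder) as Hgd.
 assert (HId : forall y, 0 < y -> derivable_pt_lim (inner q) y (- exp (- gam q y))).
 { intros y Hy. unfold inner. apply (Iinf_deriv (fun xi => exp (- gam q xi)) 0 Le y HLe Hy).
   eapply dl_cont. apply dl_expc, dl_opp, Hgd; auto. }
 assert (HIlim : lim_infty (inner q) 0) by exact (Iinf_lim _ _ _ HLe).
 destruct (Hr 1 Rlt_0_1) as [Z2 HZ2].
 assert (Hr1 : forall y, Z2 < y -> Rabs (dq y / q y ^ 2) <= 1).
 { intros y Hy. specialize (HZ2 y Hy). rewrite Rminus_0_r in HZ2. lra. }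
 set (Z1 := Z + 1).
 assert (Hgmon : forall y, Z1 <= y -> gam q Z1 <= gam q y).
 { intros y Hy. destruct (Rle_lt_or_eq_dec Z1 y Hy) as [Hlt|E]; [|subst; lra].
   destruct (MVT_cor2 (gam q) (fun y => 2 * q y) Z1 y Hlt) as [c [Hc1 Hc2]].
   { intros c Hc. apply Hgd. unfold Z1 in *; lra. }
   pose proof (Hq4 c ltac:(unfold Z1 in *; lra)).
   assert (0 <= 2 * q c * (y - Z1)) by (apply Rmult_le_pos; lra). lra. }
 assert (HGlim : lim_infty (fun y => exp (- gam q y) / (2 * q y)) 0).
 { intros eps He. set (K := exp (- gam q Z1)). pose proof (exp_pos (- gam q Z1)).
   destruct (Hqinf (K / (2*eps))) as [B HB]. exists (Rmax B Z1). intros y Hy.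
   pose proof (Rmax_l B Z1). pose proof (Rmax_r B Z1).
   specialize (HB y ltac:(lra)). pose proof (Hq4 y ltac:(unfold Z1 in *; lra)).
   assert (HE : exp (- gam q y) <= K) by (apply exp_le'; pose proof (Hgmon y ltac:(lra)); lra).
   pose proof (exp_pos (- gam q y)).
   rewrite Rminus_0_r, Rabs_right.
   2: { left; apply Rdiv_lt_0_compat; lra. }
   apply Rmult_lt_reg_r with (2 * q y); [lra|].
   replace (exp (- gam q y) / (2 * q y) * (2 * q y)) with (exp (- gam q y)) by (field; lra).
   assert (K < 2 * eps * q y).
   { apply Rmult_lt_reg_r with (/ (2 * eps)). apply Rinv_0_lt_compat; lra.
     replace (2 * eps * q y * / (2 * eps)) with (q y) by (field; lra). exact HB. }
   lra. }
 set (Zb := Rmax Z1 Z2).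
 assert (HZb : Z1 <= Zb /\ Z2 <= Zb) by (split; [apply Rmax_l | apply Rmax_r]).
 assert (Hb := I_bounds q dq (gam q) (inner q) Zb
   ltac:(intros y Hy; pose proof (Hq4 y ltac:(unfold Z1 in *; lra)); lra)
   ltac:(intros y Hy; apply Hdq'; unfold Z1 in *; lra)
   ltac:(intros y Hy; apply Hgd; unfold Z1 in *; lra)
   ltac:(intros y Hy; apply HId; unfold Z1 in *; lra)
   ltac:(intros y Hy; apply Hr1; lra)
   HIlim HGlim).
 set (g := fun y => exp (gam q y) * inner q y).
 assert (Hgb : forall y, Zb < y -> / (3 * q y) <= g y <= / q y).
 { intros y Hy. specialize (Hb y Hy). pose proof (Hq4 y ltac:(unfold Z1 in *; lra)).
   unfold g. rewrite exp_Ropp in Hb. pose proof (exp_pos (gam q y)).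
   set (X := exp (gam q y)) in *. destruct Hb as [Hb1 Hb2]. split.
   - replace (/ (3 * q y)) with (X * (2 / 3 * (/ X / (2 * q y)))) by (field; lra).
     apply Rmult_le_compat_l; lra.
   - replace (/ q y) with (X * (2 * (/ X / (2 * q y)))) by (field; lra).
     apply Rmult_le_compat_l; lra. }
 exists (fun z => 2 * - g z), Zb. split.
 { intros z Hz. apply (dl_ext (fun z => 2 * Iinf g z)). intros; reflexivity.
   apply dl_scal. apply (Iinf_deriv g 0 Lg z Hg). unfold Z1 in *; lra.
   eapply dl_cont. unfold g. apply dl_mul. apply dl_expc, Hgd. unfold Z1 in *; lra.
   apply HId. unfold Z1 in *; lra. }
 assert (Hmlow : forall z, Zb < z -> 2/3 * Mfun q z <= mfrak q z).
 { intros z Hz. assert (z0 <= z) by (unfold Z1 in *; lra).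
   unfold mfrak. fold g. rewrite (Iinf_shift g 0 Lg z Hg) by (unfold Z1 in *; lra).
   pose proof (ic_shift g 0 Lg z Hg ltac:(unfold Z1 in *; lra)) as Hgz.
   pose proof (ic_scal _ _ _ (/3) (HMic z H)) as HMz3.
   pose proof (ic_le _ _ _ _ _ HMz3 Hgz) as Hle.
   assert (/ 3 * Mfun q z <= Lg - CRInt g 0 z); [|lra].
   apply Hle. intros x Hx. destruct (Hgb x ltac:(lra)) as [Hg1 _].
   pose proof (Hq4 x ltac:(unfold Z1 in *; lra)).
   replace (/ 3 * / q x) with (/ (3 * q x)) by (field; lra). exact Hg1. }
 intros eps He. destruct (HP (6/(eps*eps) + 1)) as [B HB].
 { assert (0 < 6 / (eps * eps)) by (apply Rdiv_lt_0_compat; nra). lra. }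
 exists (Rmax B Zb). intros z Hz.
 pose proof (Rmax_l B Zb). pose proof (Rmax_r B Zb).
 specialize (HB z ltac:(lra)). pose proof (Hq4 z ltac:(unfold Z1 in *; lra)).
 pose proof (HM0 z ltac:(unfold Z1 in *; lra)). destruct (Hgb z ltac:(lra)) as [Hg1 Hg2].
 pose proof (Hmlow z ltac:(lra)) as Hm.
 set (M := Mfun q z) in *. set (m := mfrak q z) in *. set (gz := g z) in *.
 set (u := / q z) in *. assert (Hu : q z * u = 1) by (unfold u; field; lra).
 assert (Hu0 : 0 < u) by (unfold u; apply Rinv_0_lt_compat; lra).
 assert (Hg0 : 0 < gz).
 { eapply Rlt_le_trans; [|exact Hg1]. apply Rinv_0_lt_compat; lra. }
 assert (H6 : eps * eps * (q z ^ 2 * M) >= 6 + eps * eps).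
 { replace (6 + eps * eps) with (eps * eps * (6 / (eps * eps) + 1)) by (field; lra).
   apply Rle_ge, Rmult_le_compat_l; nra. }
 assert (H6' : eps * eps * M > 6 * (u * u)).
 { assert (eps * eps * M = eps * eps * (q z ^ 2 * M) * (u * u)).
   { replace (eps * eps * (q z ^ 2 * M) * (u * u)) with (eps * eps * M * ((q z * u) * (q z * u))) by ring.
     rewrite Hu; ring. }
   rewrite H3. assert (0 < u * u) by nra. nra. }
 assert (HMp : 0 < M) by nra.
 assert (Hmp : 0 < m) by lra.
 set (s := sqrt m). assert (Hs : s * s = m) by (apply sqrt_sqrt; lra).
 assert (Hs0 : 0 < s) by (apply sqrt_lt_R0; lra).
 assert (Hlt : 2 * gz < eps * s).
 { assert ((2 * gz) * (2 * gz) < (eps * s) * (eps * s)).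
   { replace ((eps * s) * (eps * s)) with (eps * eps * m) by (rewrite <- Hs; ring).
     assert (gz * gz <= u * u) by nra. nra. }
   assert (0 < eps * s) by nra.
   destruct (Rlt_dec (2 * gz) (eps * s)) as [|Hn]; auto. exfalso.
   assert (eps * s * (eps * s) <= 2 * gz * (2 * gz)) by (apply Rmult_le_compat; lra). lra. }
 rewrite Rminus_0_r.
 replace (2 * - gz / s) with (- (2 * gz / s)) by (field; lra).
 rewrite Rabs_Ropp, Rabs_right.
 2: { left; apply Rdiv_lt_0_compat; lra. }
 apply Rmult_lt_reg_r with s; [lra|].
 replace (2 * gz / s * s) with (2 * gz) by (field; lra). lra.
Qed.
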